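(* Let $r\ge1$ and let $p_1,p_2,\ldots,p_r$ be primes, each $\ge5$ (not necessarily distinct). Then for every $n\ge0$, \[ b_2\!\left(\prod_{s=1}^{r}p_s^2\, n+\frac{(24i+p_{r})\prod_{s=1}^{r-1}p_s^2\,p_{r}-1}{24}\right)\equiv 0 \pmod 2 \] for each $i=1,2,\ldots,p_r-1$ (with the empty product equal to $1$).
   Context: For a positive integer $\ell$, $b_\ell(n)$ denotes the number of partitions of $n$ having no part divisible by $\ell$. *)

(* Defs.v *)
From mathcomp Require Import all_boot.
Set Implicit Arguments. Unset Strict Implicit. Unset Printing Implicit Defensive.

(* A partition of n is encoded by its multiplicity function:
   m k = number of parts equal to k, for k = 0..n (parts are <= n),
   with sum_k k * m k = n and m 0 = 0.  Multiplicities are <= n.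
   The condition "no part divisible by ell" says m k = 0 whenever ell %| k;
   since ell %| 0, this also forces m 0 = 0. *)
Definition ell_regular_partitions (ell n : nat) :=
  [set m : {ffun 'I_n.+1 -> 'I_n.+1} |
     (\sum_(k : 'I_n.+1) (k * m k)%N == n) &&
     [forall k : 'I_n.+1, (ell %| k) ==> (m k == 0 :> nat)]].

Definition b (ell n : nat) : nat := #|ell_regular_partitions ell n|.

(* Main.v *)
Require Import Defs.
From mathcomp Require Import all_boot all_algebra.
From mathcomp Require Import ring lra zify.
Set Implicit Arguments. Unset Strict Implicit. Unset Printing Implicit Defensive.
Import GRing.Theory.

Section Shanks.
Local Open Scope ring_scope.
Variable R : comNzRingType.
Definition P k n : {poly R} := \prod_(k <= j < n) (1 - 'X^(j.+1)).
Definition aS n k : {poly R} := (-1) ^+ k * 'X^(n * k + 'C(k.+1, 2)) * P k n.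
Definition SS n := \sum_(0 <= k < n.+1) aS n k.
Definition uS m k : {poly R} := (-1) ^+ k * 'X^(m.+1 * k + 'C(k.+1, 2)) * P k m.

Lemma aS_step m k : (k < m)%N -> aS m.+1 k = uS m k + aS m k.+1 - uS m k.+1.
Proof.
move=> km.
rewrite /aS /uS.
have e1 : P k m.+1 = P k m * (1 - 'X^(m.+1)) by rewrite /P big_nat_recr //= ltnW.
have e2 : P k m = (1 - 'X^(k.+1)) * P k.+1 m by rewrite /P big_ltn.
rewrite e1 e2.
have x1 : 'X^(m * k.+1 + 'C(k.+2, 2)) = 'X^(m.+1 * k + 'C(k.+1, 2)) * 'X^(m.+1) :> {poly R}.
  by rewrite -exprD binS bin1; congr ('X^_); rewrite !mulSn !mulnS; lia.
have x2 : 'X^(m.+1 * k.+1 + 'C(k.+2, 2)) = 'X^(m.+1 * k + 'C(k.+1, 2)) * 'X^(m.+1) * 'X^(k.+1) :> {poly R}.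
  by rewrite -!exprD binS bin1; congr ('X^_); rewrite !mulSn !mulnS; lia.
rewrite x1 x2 [(-1) ^+ k.+1]exprS; move: (P k.+1 m) ((-1) ^+ k) ('X^(m.+1 * k + 'C(k.+1, 2)) : {poly R}) ('X^(k.+1) : {poly R}) ('X^(m.+1) : {poly R}) => Q s V Z W; ring.
Qed.

Lemma SS_step m : SS m.+1 = SS m + (-1) ^+ m.+1 * ('X^(m.+1 * m.+1 + 'C(m.+1, 2)) + 'X^(m.+1 * m.+1 + 'C(m.+2, 2))).
Proof.
rewrite /SS big_nat_recr //= big_nat_recr //=.
have -> : \sum_(0 <= k < m) aS m.+1 k = \sum_(0 <= k < m) (aS m k.+1 - (uS m k.+1 - uS m k)).
  rewrite !big_nat; apply: eq_bigr => k /andP[_ km]; rewrite aS_step //; ring.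
rewrite sumrB telescope_sumr //.
rewrite [in RHS]big_ltn // big_add1 /=.
have -> : uS m 0 = aS m 0 by rewrite /uS /aS !muln0.
rewrite /aS /uS /P (@big_geq _ _ _ m m) ?leqnn // (@big_geq _ _ _ m.+1 m.+1) ?leqnn // big_nat1.
have x1 : 'X^(m.+1 * m.+1 + 'C(m.+1, 2)) = 'X^(m.+1 * m + 'C(m.+1, 2)) * 'X^(m.+1) :> {poly R}.
  by rewrite -exprD; congr ('X^_); lia.
rewrite x1 [(-1) ^+ m.+1]exprS.
move: (\sum_(0 <= i < m) _) ((-1) ^+ m) ('X^(m.+1 * m + 'C(m.+1, 2)) : {poly R}) ('X^(m.+1) : {poly R}) => A s V W.

ring.
Qed.

Lemma SS_trunc N : (SS N)`_N = (P 0 N)`_N.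
Proof.
rewrite /SS big_ltn // coefD.
have -> : aS N 0 = P 0 N by rewrite /aS muln0 expr0 mul1r mul1r.
rewrite coef_sum big_nat big1 ?addr0 // => k /andP[k1 _].
rewrite /aS mulrC mulrA mulrC coefXnM ifT //.
have : (1 <= 'C(k.+1, 2))%N by rewrite bin_gt0.
have : (N <= N * k)%N by rewrite leq_pmulr.
lia.
Qed.

Lemma SS_coef N : (forall j, N <> j * j + 'C(j, 2) /\ N <> j * j + 'C(j.+1, 2))%N ->
  forall n, (SS n)`_N = 0.
Proof.
move=> hN; elim=> [|n IH].
  rewrite /SS big_nat1 /aS /P big_geq // mulr1 expr0 mul1r muln0 add0n coefXn.
  by case: (hN 0%N) => h _; case: eqP.
rewrite SS_step coefD IH add0r -signr_odd.
have [h1 h2] := hN n.+1.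
case: (odd n.+1); rewrite ?expr1 ?expr0 ?mulN1r ?mul1r ?coefN coefD !coefXn;
  do 2 (case: eqP => //); rewrite ?addr0 ?oppr0 //.
Qed.
End Shanks.
Section Count.
Local Open Scope ring_scope.

Lemma count_coef (R : nzRingType) N :
  ((b 2 N)%:R : R) = (\prod_(k < N.+1) \sum_(j < N.+1 | (2 %| k)%N ==> (j == 0 :> nat)) ('X^((k * j)%N) : {poly R}))`_N.
Proof.
rewrite bigA_distr_big_dep.
under eq_bigr do rewrite prodrXr.
rewrite coef_sum.
under eq_bigr do rewrite coefXn.
rewrite -natr_sum; congr (_%:R).
rewrite -big_mkcondr /= sum1_card /b /ell_regular_partitions.
apply: eq_card => f; rewrite !inE andbC eq_sym; congr (_ && _).
Qed.

End Count.

Section EqX.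
Local Open Scope ring_scope.
Variable R : comNzRingType.
Variable M : nat.
Definition eqX (p q : {poly R}) := exists r, p = q + r * 'X^M.
Lemma eqX_refl p : eqX p p. Proof. by exists 0; rewrite mul0r addr0. Qed.
Lemma eqX_sym p q : eqX p q -> eqX q p.
Proof. by case=> r ->; exists (- r); ring. Qed.
Lemma eqX_trans p q s : eqX p q -> eqX q s -> eqX p s.
Proof. by case=> r -> [t ->]; exists (r + t); ring. Qed.
Lemma eqX_mul p p' q q' : eqX p p' -> eqX q q' -> eqX (p * q) (p' * q').
Proof.
case=> r -> [t ->]; exists (p' * t + r * q' + r * t * 'X^M); ring.
Qed.
Lemma eqX_coef p q i : eqX p q -> (i < M)%N -> p`_i = q`_i.
Proof. by case=> r -> iM; rewrite coefD coefMXn iM addr0. Qed.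
Lemma eqX_1X e : (M <= e)%N -> eqX (1 - 'X^e) 1.
Proof.
move=> le; exists (- 'X^(e - M)); rewrite mulNr -exprD subnK //.
Qed.
Lemma eqX_prod (I : Type) (r : seq I) (P : pred I) (F G : I -> {poly R}) :
  (forall i, P i -> eqX (F i) (G i)) ->
  eqX (\prod_(i <- r | P i) F i) (\prod_(i <- r | P i) G i).
Proof.
move=> h; elim/big_rec2: _; first exact: eqX_refl.
by move=> i a c Pi e; apply: eqX_mul => //; apply: h.
Qed.
End EqX.

Section F2.
Local Open Scope ring_scope.
Local Notation F := ('F_2).
Lemma opp_F2 (p : {poly F}) : - p = p.
Proof. by apply/polyP => i; rewrite coefN (oppr_pchar2 (pchar_Fp (isT : prime 2))). Qed.

Definition G N k : {poly F} := \sum_(j < N.+1 | (2 %| k)%N ==> (j == 0 :> nat)) 'X^((k * j)%N).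
Definition A N := \prod_(k < N.+1) G N k.

Lemma G_odd N k : odd k -> G N k * (1 - 'X^k) = 1 - 'X^((k * N.+1)%N).
Proof.
move=> ok; rewrite /G dvdn2 ok /=.
under eq_bigr do rewrite exprM.
rewrite [in RHS]exprM -[in RHS]opprB (subrX1 ('X^k)).
by rewrite mulrC -mulNr opprB.
Qed.
Lemma G_even N k : ~~ odd k -> G N k = 1.
Proof.
move=> ek; rewrite /G dvdn2 ek /= (big_pred1 ord0) ?muln0 ?expr0 //.
Qed.
Lemma A_eq N : A N = \prod_(0 <= j < N) G N j.+1.
Proof.
by rewrite /A -(big_mkord xpredT (G N)) big_ltn // big_add1 /= G_even // mul1r.
Qed.

Definition O N : {poly F} := \prod_(0 <= j < N) (if odd j.+1 then 1 - 'X^(j.+1) else 1).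
Lemma AO N : eqX N.+1 (A N * O N) 1.
Proof.
rewrite A_eq /O -big_split /=.
apply: (@eqX_trans _ _ _ (\prod_(0 <= j < N) 1)); last by rewrite big1_eq; apply: eqX_refl.
apply: eqX_prod => j _.
case: ifP => oj.
  rewrite G_odd //; apply: eqX_1X; exact: leq_pmull.
rewrite mulr1 G_even; first exact: eqX_refl. by rewrite /= negbK; move: oj => /negbFE.
Qed.

Lemma split_oe (f : nat -> {poly F}) N :
  \prod_(0 <= j < N) f j.+1 =
  \prod_(0 <= j < N) (if odd j.+1 then f j.+1 else 1) * \prod_(0 <= j < N./2) f (j.+1).*2.
Proof.
elim: N => [|N IH]; first by rewrite !big_geq // mulr1.
rewrite !big_nat_recr //= IH.
have hN := odd_double_half N.
case oN: (odd N) => /=.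
  rewrite uphalf_half oN add1n.
  rewrite big_nat_recr //=.
  have -> : (N./2).+1.*2 = N.+1 by move: hN; rewrite oN -!addnn; lia.
  by rewrite mulr1 -!mulrA [_ * f _]mulrC.
rewrite uphalf_half oN add0n.
by rewrite -!mulrA [_ * f _]mulrC.
Qed.

Definition Dp N : {poly F} := \prod_(0 <= j < N) (1 + 'X^(j.+1)).
Definition Dm N : {poly F} := \prod_(0 <= j < N) (1 - 'X^(j.+1)).
Definition E N : {poly F} := \prod_(0 <= j < N./2) (1 - 'X^((j.+1).*2)).

Lemma Dm_split N : Dm N = O N * E N.
Proof. exact: (split_oe (fun m => 1 - 'X^m)). Qed.

Lemma DpDm N : Dp N * Dm N = \prod_(0 <= j < N) (1 - 'X^((j.+1).*2)).
Proof.
rewrite -big_split; apply: eq_bigr => j _ /=.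
rewrite -addnn exprD; move: ('X^(j.+1) : {poly F}) => Y; ring.
Qed.

Lemma one_m_X_neq0 m : (0 < m)%N -> (1 - 'X^m : {poly F}) != 0.
Proof.
move=> m0; apply/eqP => h; have := congr1 (fun p : {poly F} => p`_0) h.
rewrite coefB coef1 coefXn /= eq_sym (negbTE (lt0n_neq0 m0)) subr0 coef0.
by move/eqP; rewrite oner_eq0.
Qed.

Lemma DpO N : eqX N.+1 (Dp N * O N) 1.
Proof.
have E0 : E N != 0.
  rewrite /E prodf_seq_neq0; apply/allP => j _ /=; apply: one_m_X_neq0.
  by rewrite -addnn.
have hN := odd_double_half N.
have e : E N * (Dp N * O N) = E N * \prod_(N./2 <= j < N) (1 - 'X^((j.+1).*2)).
  rewrite mulrCA mulrA -mulrA [E N * O N]mulrC -Dm_split DpDm.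
  have hl : (N./2 <= N)%N by rewrite leq_half_double -addnn; lia.
  by rewrite /E (@big_cat_nat _ _ _ N./2 0 N) .
rewrite (mulfI E0 e).
apply: (@eqX_trans _ _ _ (\prod_(N./2 <= j < N) 1)); last by rewrite big1_eq; apply: eqX_refl.
rewrite big_nat [X in eqX _ _ X]big_nat; apply: eqX_prod => j /andP[hj _].
apply: eqX_1X; move: hN hj; rewrite -!addnn; case: (odd N) => /=; lia.
Qed.

Lemma A_Dm N : eqX N.+1 (A N) (Dm N).
Proof.
apply: (@eqX_trans _ _ _ (A N * (Dp N * O N))).
  rewrite -{1}[A N]mulr1; apply: eqX_mul; [exact: eqX_refl| exact: eqX_sym (DpO N)].
rewrite mulrCA mulrC.
apply: (@eqX_trans _ _ _ (1 * Dp N)).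
  apply: eqX_mul; [exact: AO| exact: eqX_refl].
rewrite mul1r /Dp /Dm; rewrite (eq_bigr (fun j => 1 - 'X^(j.+1))); first exact: eqX_refl.
by move=> j _; rewrite -[X in 1 + X]opp_F2.
Qed.

End F2.

Lemma fin24 r : r < 24 -> ~~ (2 %| r) -> ~~ (3 %| r) -> r ^ 2 %% 24 = 1.
Proof. by do 24 (case: r => [//|r]). Qed.

Lemma sq_mod24 q : prime q -> 5 <= q -> q ^ 2 %% 24 = 1.
Proof.
move=> pq q5; rewrite -modnXm fin24 ?ltn_pmod //.
  apply/negP => h; have : 2 %| q by rewrite (divn_eq q 24) dvdn_addr ?dvdn_mull.
  by rewrite dvdn_prime2 // => /eqP q2; lia.
apply/negP => h; have : 3 %| q by rewrite (divn_eq q 24) dvdn_addr ?dvdn_mull.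
by rewrite dvdn_prime2 // => /eqP q2; lia.
Qed.

Lemma c2 j : 'C(j, 2) * 2 + j = j * j.
Proof. elim: j => [//|j IH]; rewrite binS bin1; nia. Qed.

Lemma pent_sq N j : (N = j * j + 'C(j, 2) \/ N = j * j + 'C(j.+1, 2)) ->
  exists x, 24 * N + 1 = x * x.
Proof.
have := c2 j; have := c2 j.+1; rewrite binS bin1 => h1 h2.
case=> ->.
  case: j h1 h2 => [|j] h1 h2; first by exists 1.
  exists (6 * j + 5); nia.
exists (6 * j + 1); nia.
Qed.

Lemma prod_sq (p : nat -> nat) a c :
  \prod_(a <= s < c) p s ^ 2 = (\prod_(a <= s < c) p s) ^ 2.
Proof.
elim/big_rec2: _ => [//|s x y _ ->]; by rewrite expnMn.
Qed.

Lemma not_sq (r : nat) (p : nat -> nat) n i :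
  1 <= r ->
  (forall s, 1 <= s <= r -> prime (p s) /\ 5 <= p s) ->
  1 <= i <= (p r).-1 ->
  forall x, 24 * ((\prod_(1 <= s < r.+1) p s ^ 2) * n
         + ((24 * i + p r) * (\prod_(1 <= s < r) p s ^ 2) * p r - 1) %/ 24) + 1 <> x * x.
Proof.
move=> r1 hp /andP[i1 ir] x.
have [pq q5] : prime (p r) /\ 4 < p r by apply: hp; rewrite r1 leqnn.
set q := p r in pq q5 ir *.
rewrite big_nat_recr //= -/q.
have hQ : \prod_(1 <= s < r) p s ^ 2 %% 24 = 1.
  rewrite big_nat; elim/big_rec: _ => [//|s y /andP[s1 sr] hy].
  have [ps ps5] : prime (p s) /\ 4 < p s by apply: hp; rewrite s1 (ltnW sr).
  by rewrite -modnMm hy sq_mod24 // muln1.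
rewrite prod_sq in hQ *.
set y := \prod_(1 <= s < r) p s in hQ *.
have q0 : 0 < q by exact: prime_gt0.
have y0 : 0 < y.
  rewrite /y big_nat; elim/big_rec: _ => [//|s z /andP[s1 sr] hz].
  have [ps _] : prime (p s) /\ 4 < p s by apply: hp; rewrite s1 (ltnW sr).
  by rewrite muln_gt0 hz andbT prime_gt0.
set X := (24 * i + q) * y ^ 2 * q.
have hX : X %% 24 = 1.
  have -> : X = (i * y ^ 2 * q) * 24 + q ^ 2 * y ^ 2 by rewrite /X; ring.
  by rewrite modnMDl -modnMm sq_mod24 // hQ.
have eX := divn_eq X 24; rewrite hX in eX.
have -> : (X - 1) %/ 24 = X %/ 24 by rewrite {1}eX addnK mulnK.
set W := 24 * q * n + 24 * i + q.
have eN : 24 * (y ^ 2 * q ^ 2 * n + X %/ 24) + 1 = y ^ 2 * q * W.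
  rewrite mulnDr -addnA [_ * (X %/ 24)]mulnC -eX /X /W; ring.
rewrite eN => e.
have nW : ~~ (q %| W).
  rewrite /W dvdn_addl // dvdn_addr; last first.
    by apply: dvdn_mulr; apply: dvdn_mull.
  apply/negP; rewrite Euclid_dvdM // => /orP[].
    have -> : 24 = 2 ^ 3 * 3 by [].
    rewrite Euclid_dvdM // Euclid_dvdX // andbT => /orP[] /dvdn_leq; rewrite ltn0Sn => /(_ isT); lia.
  move/(dvdn_leq i1); lia.
have W0 : 0 < W by rewrite /W; lia.
have := congr1 (logn q) e.
have x0 : 0 < x.
  case: x e => [|x] // e.
  have h : 0 < y ^ 2 * q * W by rewrite !muln_gt0 y0 q0 W0.
  by rewrite e in h.
rewrite lognM ?muln_gt0 ?expn_gt0 ?y0 ?q0 // lognM ?expn_gt0 ?y0 // lognX.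
rewrite lognM ?x0 // (logn_coprime (_ : coprime q W)) ?prime_coprime //.
rewrite (logn_prime q pq) eqxx.
lia.
Qed.

Lemma b2_even N : (forall j, N <> j * j + 'C(j, 2) /\ N <> j * j + 'C(j.+1, 2)) ->
  2 %| b 2 N.
Proof.
move=> hN.
rewrite (dvdn_pcharf (pchar_Fp (isT : prime 2))) (count_coef 'F_2 N).
rewrite (eqX_coef (A_Dm N) (ltnSn N)).
have -> : ((Dm N)`_N = (SS 'F_2 N)`_N)%R by rewrite SS_trunc.
by rewrite (@SS_coef 'F_2 N hN).
Qed.

Theorem theorem3p6 (r : nat) (p : nat -> nat) :
  1 <= r ->
  (forall s, 1 <= s <= r -> prime (p s) /\ 5 <= p s) ->
  forall n i, 1 <= i <= (p r).-1 ->
    b 2 ((\prod_(1 <= s < r.+1) p s ^ 2) * n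
         + ((24 * i + p r) * (\prod_(1 <= s < r) p s ^ 2) * p r - 1) %/ 24)
      = 0 %[mod 2].
Proof.
move=> r1 hp n i hi.
apply/eqP; rewrite mod0n; apply: b2_even => j; split=> h.
  by have [x hx] := pent_sq (or_introl h); exact: (not_sq r1 hp hi hx).
by have [x hx] := pent_sq (or_intror h); exact: (not_sq r1 hp hi hx).
Qed.
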